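(* Let $K$ and $L$ be $n$-element finite sets, $M=K\times L$, and let $u=(u_{kl})$ be a unitary matrix indexed by $K\times L$ all of whose entries are nonzero. Let $E\subset F(M)$ be the subspace of functions of the form $f_{kl}=a_k+b_l$ for some functions $a\in F(K)$, $b\in F(L)$ (so $\dim E=2n-1$). Then $I_uf=f$ for every $f\in E$. Consequently the multiplicity of the eigenvalue $1$ in the spectrum of the Berezin transform $I_u$ is at least $2n-1$.
   Context: For a finite set $J$, $F(J)$ denotes the space of complex-valued functions on $J$. For $f=(f_{kl})\in F(M)$, $C_uf$ and $D_uf$ are the operators on $F(K)$ with matrices $x_{kk'}=\sum_{l\in L}u_{kl}f_{kl}\bar u_{k'l}$ and $y_{kk'}=\sum_{l\in L}u_{kl}f_{k'l}\bar u_{k'l}$ respectively; these maps $F(M)\to\operatorname{End}F(K)$ are linear bijections. The Berezin transform is $I_u:=C_u^{-1}D_u:F(M)\to F(M)$; explicitly $(I_uf)_{kl}=\sum_{k'\in K,l'\in L}\frac{u_{kl'}u_{k'l}}{u_{kl}u_{k'l'}}f_{k'l'}|u_{k'l'}|^2$. *)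

(* Defs.v *)
From HB Require Import structures.
From mathcomp Require Import all_boot all_order all_algebra.
Set Implicit Arguments. Unset Strict Implicit. Unset Printing Implicit Defensive.
Import Order.TTheory GRing.Theory Num.Theory.
Local Open Scope ring_scope.

(* Scalars: an arbitrary numClosedFieldType C (e.g. complex numbers); x^* is
   complex conjugation.  F(J) is modelled as {ffun J -> C^o}, which is a
   finite-dimensional vector space over C (vectType C). *)

Section Berezin.
Variables (C : numClosedFieldType) (K L : finType).

Definition F (J : finType) := {ffun J -> C^o}.

Definition unitary (u : K -> L -> C) : Prop :=
  (forall k k' : K, \sum_(l : L) u k l * (u k' l)^* = (k == k')%:R) /\
  (forall l l' : L, \sum_(k : K) (u k l)^* * u k l' = (l == l')%:R).

(* C_u f and D_u f : matrices on F(K), encoded as functions on K * K. *)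
Definition Cu_fun (u : K -> L -> C) (f : F (K * L)%type) : F (K * K)%type :=
  [ffun kk => \sum_(l : L) u kk.1 l * f (kk.1, l) * (u kk.2 l)^*].
Definition Du_fun (u : K -> L -> C) (f : F (K * L)%type) : F (K * K)%type :=
  [ffun kk => \sum_(l : L) u kk.1 l * f (kk.2, l) * (u kk.2 l)^*].

Definition Cu u : 'Hom(F (K * L)%type, F (K * K)%type) := linfun (Cu_fun u).
Definition Du u : 'Hom(F (K * L)%type, F (K * K)%type) := linfun (Du_fun u).

(* Berezin transform I_u := C_u^{-1} D_u  (C_u is a linear bijection) *)
Definition Berezin u : 'End(F (K * L)%type) := ((Cu u)^-1 \o Du u)%VF.

Definition sumfun (a : K -> C) (b : L -> C) : F (K * L)%type :=
  [ffun kl => a kl.1 + b kl.2].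

End Berezin.

(* Main.v *)
Require Import Defs.
From HB Require Import structures.
From mathcomp Require Import all_boot all_order all_algebra ring zify.
Import Order.TTheory GRing.Theory Num.Theory.
Local Open Scope ring_scope.

Section S.
Variables (C : numClosedFieldType) (K L : finType).
Implicit Type u : K -> L -> C.

Lemma Cu_lin u : linear (Cu_fun u).
Proof.
move=> a f g; apply/ffunP=> kk; rewrite !ffunE /= scaler_sumr -big_split /=.
apply: eq_bigr => l _; rewrite !ffunE. rewrite /GRing.scale /=. ring.
Qed.
Lemma Du_lin u : linear (Du_fun u).
Proof.
move=> a f g; apply/ffunP=> kk; rewrite !ffunE /= scaler_sumr -big_split /=.
apply: eq_bigr => l _; rewrite !ffunE. rewrite /GRing.scale /=. ring.
Qed.

Lemma test : \dim {:(F C K * F C L)%type} = (#|K| + #|L|)%N.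
Proof. have h1 (J : finType) : dim (F C J) = (#|J| * 1)%N by []. by rewrite dimvf /dim /= !h1 !muln1. Qed.

HB.instance Definition _ u := GRing.isLinear.Build C _ _ *:%R (Cu_fun u) (Cu_lin u).
HB.instance Definition _ u := GRing.isLinear.Build C _ _ *:%R (Du_fun u) (Du_lin u).

Lemma CuE u f : Cu u f = Cu_fun u f. Proof. by rewrite lfunE. Qed.
Lemma DuE u f : Du u f = Du_fun u f. Proof. by rewrite lfunE. Qed.

Lemma Cu_inj u : unitary u -> (forall k l, u k l != 0) -> lker (Cu u) == 0%VS.
Proof.
move=> [_ hu2] hnz; apply/eqP/vspaceP => f; rewrite memv_ker memv0 CuE.
apply/eqP/eqP => [/ffunP H|->]; last by apply/ffunP=> kk; rewrite !ffunE big1 // => l _; rewrite !ffunE mulr0 mul0r.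
apply/ffunP => -[k l]; rewrite ffunE.
have H' k' : \sum_l u k l * f (k, l) * (u k' l)^* = 0 by have := H (k, k'); rewrite !ffunE.
have : u k l * f (k, l) = 0.
  transitivity (\sum_l' u k l' * f (k, l') * (l' == l)%:R).
    rewrite (bigD1 l) //= eqxx mulr1 big1 ?addr0 // => l' /negbTE ->; by rewrite mulr0.
  under eq_bigr => l' _ do rewrite -hu2 mulr_sumr.
  rewrite exchange_big /= big1 // => k' _.
  transitivity (u k' l * \sum_l' u k l' * f (k, l') * (u k' l')^*); last by rewrite H' mulr0.
  rewrite mulr_sumr; apply: eq_bigr => l' _; ring.
by move/eqP; rewrite mulf_eq0 (negbTE (hnz _ _)) /= => /eqP.
Qed.

Lemma fixE u a b : unitary u -> (forall k l, u k l != 0) ->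
  Berezin u (sumfun a b) = sumfun a b.
Proof.
move=> hu hnz; rewrite /Berezin comp_lfunE.
suff -> : Du u (sumfun a b) = Cu u (sumfun a b) by rewrite lker0_lfunK // Cu_inj.
rewrite CuE DuE; apply/ffunP => -[k k']; rewrite !ffunE /=.
have [<-|nkk] := eqVneq k k'; first by [].
have hs x : \sum_l u k l * sumfun a b (x, l) * (u k' l)^* =
    a x * (k == k')%:R + \sum_l u k l * b l * (u k' l)^*.
  rewrite -hu.1 mulr_sumr -big_split /=. apply: (@eq_bigr C). move=> l _; rewrite ffunE /=; ring.
by rewrite !hs (negbTE nkk) !mulr0.
Qed.

Definition sumlin (p : (F C K * F C L)%type) : F C (K * L)%type :=
  [ffun kl => p.1 kl.1 + p.2 kl.2].
Lemma sumlin_lin : linear sumlin.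
Proof.
move=> c p q; apply/ffunP => kl. rewrite !ffunE /= /GRing.scale /=; ring.
Qed.
HB.instance Definition _ := GRing.isLinear.Build C _ _ *:%R sumlin sumlin_lin.
Definition S : 'Hom((F C K * F C L)%type, F C (K * L)%type) := linfun sumlin.

Lemma dim_part u n : #|K| = n -> #|L| = n -> unitary u -> (forall k l, u k l != 0) ->
  ((2 * n).-1 <= \dim (passmx.leigenspace (Berezin u) 1))%N.
Proof.
move=> hK hL hu hnz.
case: n hK hL => [//|n] hK hL.
have sub : (limg S <= passmx.leigenspace (Berezin u) 1)%VS.
  apply/subvP => v /memv_imgP [p _ ->]; have e : S p = sumfun p.1 p.2 by rewrite lfunE.
  by rewrite memv_ker add_lfunE opp_lfunE scale_lfunE id_lfunE e fixE // scale1r subrr.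
have hd := limg_ker_dim S fullv.
rewrite capfv test hK hL in hd.
pose w : (F C K * F C L)%type := ([ffun=> 1], [ffun=> -1]).
have kerw : (lker S <= <[w]>)%VS.
  apply/subvP => p; rewrite memv_ker lfunE /= => /eqP H.
  have H' k l : p.1 k + p.2 l = 0.
    by move/ffunP: H => /(_ (k, l)); rewrite !ffunE.
  have [k0 _] : exists k0 : K, k0 \in K by apply/card_gt0P; rewrite hK.
  have [l0 _] : exists l0 : L, l0 \in L by apply/card_gt0P; rewrite hL.
  apply/vlineP; exists (p.1 k0); case: p H H' => p1 p2 /= _ H'.
  congr pair; apply/ffunP => x; rewrite !ffunE /GRing.scale /=.
    rewrite mulr1; apply: (addIr (p2 l0)); by rewrite !H'.
  by rewrite mulrN1; apply/eqP; rewrite -addr_eq0 addrC H'.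
have d1 := dimvS kerw.
have d2 := dimvS sub.
rewrite dim_vline in d1.
have : (\dim (lker S) <= 1)%N by apply: leq_trans d1 (leq_b1 _).
move: d2 hd.
lia.
Qed.

End S.


Theorem lemma2p5 (C : numClosedFieldType) (K L : finType) (n : nat)
  (hK : #|K| = n) (hL : #|L| = n) (u : K -> L -> C)
  (hu : unitary u) (hnz : forall k l, u k l != 0) :
  (forall (a : K -> C) (b : L -> C), Berezin u (sumfun a b) = sumfun a b) /\
  ((2 * n).-1 <= \dim (passmx.leigenspace (Berezin u) 1))%N.
Proof. split; [by move=> a b; apply: fixE | exact: dim_part hK hL hu hnz]. Qed.
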